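(* Let $K$ be a field, $A$ a cocommutative Hopf algebra over $K$ with antipode $S$, and $x\colon X\to A$, $y\colon Y\to A$ inclusions of Hopf subalgebras. The following are equivalent: (a) there exists a (necessarily unique) morphism of Hopf algebras $p\colon X\otimes Y\to A$ with $p(a\otimes 1)=a$ for all $a\in X$ and $p(1\otimes b)=b$ for all $b\in Y$; (b) $ab=ba$ for all $a\in X$ and $b\in Y$; (c) $a_1b_1S(a_2)S(b_2)=\epsilon(a)\epsilon(b)1$ for all $a\in X$ and $b\in Y$.
   Context: Sweedler notation $\Delta(a)=a_1\otimes a_2$ is used. $X\otimes Y$ is the product of $X$ and $Y$ in the category of cocommutative Hopf algebras, with the tensor product Hopf algebra structure; condition (a) says that $X$ and $Y$ commute in the sense of Huq. *)

(* Defs.v *)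
(* Hopf algebras over a field K, with tensors encoded by
   finite Sweedler-style representatives. *)
From HB Require Import structures.
From mathcomp Require Import all_boot all_order all_algebra.
Set Implicit Arguments. Unset Strict Implicit. Unset Printing Implicit Defensive.
Import GRing.Theory.
Local Open Scope ring_scope.

Section Tensors.
Variable K : fieldType.

(* Two finite representatives s, t of elements of V (x) W are equal as
   tensors iff they agree under all pairs of linear functionals
   (V (x) W embeds into Bil(V^* x W^*, K) over a field). *)
Definition teq2 (V W : lmodType K) (s t : seq (V * W)) : Prop :=
  forall (f : {scalar V}) (g : {scalar W}),
    \sum_(p <- s) f p.1 * g p.2 = \sum_(p <- t) f p.1 * g p.2.

Definition teq3 (U V W : lmodType K) (s t : seq (U * V * W)) : Prop :=
  forall (f : {scalar U}) (g : {scalar V}) (h : {scalar W}),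
    \sum_(p <- s) f p.1.1 * g p.1.2 * h p.2
    = \sum_(p <- t) f p.1.1 * g p.1.2 * h p.2.
End Tensors.

Section Hopf.
Variables (K : fieldType) (A : algType K).

(* D a is a (chosen) representative of Delta(a) = sum a_1 (x) a_2. *)
Definition hopf_algebra (D : A -> seq (A * A)) (e : A -> K) (S : A -> A)
  : Prop :=
  [/\
      forall (k : K) (a b : A),
        teq2 (D (k *: a + b)) ([seq (k *: p.1, p.2) | p <- D a] ++ D b),
      forall a : A,
        teq3 [seq (q.1, q.2, p.2) | p <- D a, q <- D p.1]
             [seq (p.1, q.1, q.2) | p <- D a, q <- D p.2],
      (forall (k : K) (a b : A), e (k *: a + b) = k * e a + e b) /\
      (forall a : A, \sum_(p <- D a) e p.1 *: p.2 = a /\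
                     \sum_(p <- D a) e p.2 *: p.1 = a),
      [/\ forall a b : A,
            teq2 (D (a * b)) [seq (p.1 * q.1, p.2 * q.2) | p <- D a, q <- D b],
          teq2 (D 1) [:: (1, 1)],
          forall a b : A, e (a * b) = e a * e b
        & e 1 = 1]
    &
      (forall (k : K) (a b : A), S (k *: a + b) = k *: S a + S b) /\
      (forall a : A, \sum_(p <- D a) S p.1 * p.2 = (e a)%:A /\
                     \sum_(p <- D a) p.1 * S p.2 = (e a)%:A)].

Definition cocommutative (D : A -> seq (A * A)) : Prop :=
  forall a : A, teq2 (D a) [seq (p.2, p.1) | p <- D a].

Definition in2 (X Y : A -> Prop) (s : seq (A * A)) : Prop :=
  forall p, p \in s -> X p.1 /\ Y p.2.

Definition hopf_subalgebra (D : A -> seq (A * A)) (S : A -> A) (X : A -> Prop)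
  : Prop :=
  [/\ X 1,
      forall (k : K) (a b : A), X a -> X b -> X (k *: a + b),
      forall a b : A, X a -> X b -> X (a * b),
      forall a : A, X a -> X (S a)
    & forall a : A, X a -> exists s, in2 X X s /\ teq2 s (D a)].

(* A linear map p : X (x) Y -> A, given by the bilinear map
   P a b = p (a (x) b) on X x Y, is a morphism of Hopf algebras, where
   X (x) Y carries the tensor product Hopf algebra structure. *)
Definition tensor_hopf_morphism (D : A -> seq (A * A)) (e : A -> K)
  (S : A -> A) (X Y : A -> Prop) (P : A -> A -> A) : Prop :=
  [/\
      (forall (k : K) (a a' b : A), X a -> X a' -> Y b ->
         P (k *: a + a') b = k *: P a b + P a' b) /\
      (forall (k : K) (a b b' : A), X a -> Y b -> Y b' ->
         P a (k *: b + b') = k *: P a b + P a b'),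
      P 1 1 = 1 /\
      (forall a a' b b', X a -> X a' -> Y b -> Y b' ->
         P (a * a') (b * b') = P a b * P a' b'),
      (forall a b s t, X a -> Y b -> in2 X X s -> teq2 s (D a) ->
         in2 Y Y t -> teq2 t (D b) ->
         teq2 (D (P a b)) [seq (P p.1 q.1, P p.2 q.2) | p <- s, q <- t]) /\
      (forall a b, X a -> Y b -> e (P a b) = e a * e b)
    &
      forall a b, X a -> Y b -> S (P a b) = P (S a) (S b)].
End Hopf.

(* Main.v *)
Require Import Defs.
From HB Require Import structures.
From mathcomp Require Import all_boot all_order all_algebra.
From mathcomp Require Import boolp classical_sets.
Import GRing.Theory.
Local Open Scope ring_scope.


Definition wrapf (K:fieldType)(V:lmodType K)(h : V -> K) (hl : scalar h) : V -> K := h.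
HB.instance Definition _ (K:fieldType)(V:lmodType K)(h : V -> K) (hl : scalar h) := GRing.isLinear.Build K V K *%R (@wrapf K V h hl) hl.

Lemma mkscalar (K:fieldType)(V:lmodType K)(h : V -> K) : scalar h -> exists f : {scalar V}, forall v, f v = h v.
Proof. move=> hl. by exists (@wrapf K V h hl : {scalar V}). Qed.

Lemma sep (K:fieldType)(V:lmodType K)(x:V) : x != 0 -> exists f : {scalar V}, f x = 1.
Proof.
move=> x0.
pose P := fun W : set V => (forall k a b, W a -> W b -> W (k *: a + b)) /\ ~ W x.
have [W [[Wcl Wx] Wmax]] : exists W, P W /\ (forall B, (W `<` B)%classic -> ~ P B).
  apply: Zorn_bigcup => F FP tot; split.
  - move=> k a b [Wa Fa aWa] [Wb Fb bWb].
    case: (tot Wa Wb Fa Fb) => sub.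
    + exists Wb => //; apply: (FP Wb Fb).1 => //; exact: sub.
    + exists Wa => //; apply: (FP Wa Fa).1 => //; exact: sub.
  - by move=> [W' FW' W'x]; exact: (FP _ FW').2 W'x.
have W0 : W 0.
  case: (pselect (exists w, W w)) => [[w Ww]|nW].
    by have := Wcl (-1) w w Ww Ww; rewrite scaleN1r addNr.
  exfalso; apply: (Wmax (fun v : V => v = 0)).
    split; first by move=> w Ww; exfalso; apply: nW; exists w.
    by move=> /(_ 0 erefl) ?; apply: nW; exists 0.
  split; first by move=> k a b -> ->; rewrite scaler0 addr0.
  by move=> x0'; move: x0; rewrite x0' eqxx.
have uniq : forall v c d, W (v - c *: x) -> W (v - d *: x) -> c = d.
  move=> v c d Wc Wd; apply/eqP; apply/negPn/negP => cd.
  have := Wcl (-1) _ _ Wc Wd.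
  have -> : (-1) *: (v - c *: x) + (v - d *: x) = (c - d) *: x.
    by rewrite scaleN1r opprB addrA subrK scalerBl.
  move=> Wcd; apply: Wx.
  have := Wcl (c - d)^-1 _ _ Wcd W0.
  by rewrite addr0 scalerA mulVf ?scale1r // subr_eq0.
have key : forall v, exists c, W (v - c *: x).
  move=> v; case: (pselect (W v)) => Wv.
    by exists 0; rewrite scale0r subr0.
  pose W' := fun a => exists c, W (a - c *: v).
  have W'cl : forall k a b, W' a -> W' b -> W' (k *: a + b).
    move=> k a b [c Wa] [d Wb]; exists (k * c + d).
    have := Wcl k _ _ Wa Wb.
    congr W.
    by rewrite scalerDl -scalerA scalerBr opprD addrACA.
  have : W' x.
    apply: contrapT => nW'x; apply: (Wmax W'); last by split.
    split.
      by move=> w Ww; exists 0; rewrite scale0r subr0.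
    by move=> sub; apply: Wv; apply: sub; exists 1; rewrite scale1r subrr.
  move=> [c Wxc].
  have c0 : c != 0.
    by apply/eqP => c0; apply: Wx; move: Wxc; rewrite c0 scale0r subr0.
  exists c^-1.
  have := Wcl (- c^-1) _ _ Wxc W0.
  congr W.
  by rewrite addr0 scalerBr !scaleNr scalerA mulVf // scale1r opprK addrC.
pose f := fun v => projT1 (cid (key v)).
have fP : forall v, W (v - f v *: x) by move=> v; exact: (projT2 (cid (key v))).
have fl : scalar f.
  move=> k a b /=; apply: (uniq (k *: a + b)); first exact: fP.
  have := Wcl k _ _ (fP a) (fP b).
  congr W.
  by rewrite scalerDl -scalerA scalerBr opprD addrACA.
have [g gE] := @mkscalar _ _ f fl.
exists g; rewrite gE; apply: (uniq x); first exact: fP.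
by rewrite scale1r subrr.
Qed.


Lemma peel (K:fieldType)(V:lmodType K)(Z:Type)(T : (Z -> K) -> Prop)(M : lmodType K)(B : V -> Z -> M)
 (Bl : forall z k a b, B (k *: a + b) z = k *: B a z + B b z)
 (Br : forall w : seq (K * Z), (forall phi, T phi -> \sum_(p <- w) p.1 * phi p.2 = 0) ->
    forall x, \sum_(p <- w) p.1 *: B x p.2 = 0)
 (u : seq (V * Z)) :
 (forall (f : {scalar V}) phi, T phi -> \sum_(p <- u) f p.1 * phi p.2 = 0) ->
 \sum_(p <- u) B p.1 p.2 = 0.
Proof.
have B0 : forall z, B 0 z = 0.
  by move=> z; have := Bl z (-1) 0 0; rewrite !scaleN1r !addNr => ->.
have BB : forall a c x z, B (a - c *: x) z = B a z - c *: B x z.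
  by move=> a c x z; rewrite [a - _]addrC -[- (c *: x)]scaleNr Bl scaleNr addrC.
move: {2}(size u) (erefl (size u)) => n; elim: n u => [|n IH] [|[x1 z1] u] //=.
  by move=> _ _; rewrite big_nil.
move=> [sz] H; rewrite big_cons /=.
have H' : forall (f : {scalar V}) phi, T phi -> f x1 * phi z1 + \sum_(p <- u) f p.1 * phi p.2 = 0.
  by move=> f phi Tp; have := H f phi Tp; rewrite big_cons.
case: (eqVneq x1 0) => [x10|x10].
  rewrite x10 B0 add0r; apply: IH => // f phi Tp.
  by have := H' f phi Tp; rewrite x10 linear0 mul0r add0r.
have [f0 f01] := @sep _ _ _ x10.
have H0 : forall phi, T phi -> \sum_(p <- u) f0 p.1 * phi p.2 = - phi z1.
  move=> phi Tp; apply/eqP; rewrite -addr_eq0 addrC.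
  by rewrite -[phi z1]mul1r -f01; apply/eqP; apply: H'.
have E1 : B x1 z1 + \sum_(p <- u) f0 p.1 *: B x1 p.2 = 0.
  have := Br [seq (f0 p.1, p.2) | p <- (x1, z1) :: u] _ x1.
  rewrite big_map big_cons /= f01 scale1r; apply.
  move=> phi Tp; rewrite big_cons /= mul1r.
  by rewrite big_map /= H0 // addrN.
have E2 : \sum_(p <- u) B (p.1 - f0 p.1 *: x1) p.2 = 0.
  have := IH [seq (p.1 - f0 p.1 *: x1, p.2) | p <- u].
  rewrite size_map => /(_ sz) E.
  rewrite -[LHS](big_map (fun p => (p.1 - f0 p.1 *: x1, p.2)) xpredT (fun p => B p.1 p.2)).
  apply: E => f phi Tp; rewrite big_map /=.
  under eq_bigr => p _ do rewrite linearB linearZ /= mulrBl.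
  rewrite sumrB.
  under [X in _ - X]eq_bigr => p _ do rewrite -mulrA mulrC -mulrA.
  rewrite -mulr_sumr.
  under [X in _ - _ * X]eq_bigr => p _ do rewrite mulrC.
  by rewrite H0 // mulrN opprK addrC; exact: H'.
have E3 : \sum_(p <- u) B p.1 p.2 = \sum_(p <- u) f0 p.1 *: B x1 p.2.
  apply/eqP; rewrite -subr_eq0 -sumrB; apply/eqP.
  by rewrite -[RHS]E2; apply: eq_bigr => p _; rewrite BB.
by rewrite E3.
Qed.


Section Tr.
Variables (K : fieldType) (V : lmodType K).

Lemma sepsum (w : seq (K * V)) :
  (forall g : {scalar V}, \sum_(p <- w) p.1 * g p.2 = 0) -> \sum_(p <- w) p.1 *: p.2 = 0.
Proof.
move=> H; apply/eqP; apply/negPn/negP => nz.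
have [g g1] := @sep _ _ _ nz.
have E : g (\sum_(p <- w) p.1 *: p.2) = 0.
  by rewrite linear_sum -[RHS](H g); apply: eq_bigr => p _; rewrite linearZ.
by move: (@oner_neq0 K); rewrite -g1 E eqxx.
Qed.

Lemma van2 (M : lmodType K) (B : V -> V -> M)
  (Bl : forall y k a b, B (k *: a + b) y = k *: B a y + B b y)
  (Br : forall x k a b, B x (k *: a + b) = k *: B x a + B x b)
  (u : seq (V * V)) :
  (forall f g : {scalar V}, \sum_(p <- u) f p.1 * g p.2 = 0) ->
  \sum_(p <- u) B p.1 p.2 = 0.
Proof.
move=> H.
apply: (@peel K V V (fun phi => exists g : {scalar V}, forall v, phi v = g v) M B Bl).
  move=> w Hw x.
  have B0 : B x 0 = 0.
    by have := Br x (-1) 0 0; rewrite !scaleN1r !addNr => ->.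
  have -> : \sum_(p <- w) p.1 *: B x p.2 = B x (\sum_(p <- w) p.1 *: p.2).
    elim: w {Hw} => [|p w IH]; first by rewrite !big_nil B0.
    by rewrite !big_cons Br IH.
  rewrite sepsum ?B0 // => g; apply: Hw; by exists g.
by move=> f phi [g gE]; under eq_bigr => p _ do rewrite gE; apply: H.
Qed.

Lemma teq2_tr (M : lmodType K) (B : V -> V -> M)
  (Bl : forall y k a b, B (k *: a + b) y = k *: B a y + B b y)
  (Br : forall x k a b, B x (k *: a + b) = k *: B x a + B x b)
  (s t : seq (V * V)) :
  teq2 s t -> \sum_(p <- s) B p.1 p.2 = \sum_(p <- t) B p.1 p.2.
Proof.
move=> H.
have BN : forall x y, B (- x) y = - B x y.
  have B0 : forall y, B 0 y = 0.
    by move=> y; have := Bl y (-1) 0 0; rewrite !scaleN1r !addNr => ->.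
  by move=> x y; have := Bl y (-1) x 0; rewrite !scaleN1r addr0 B0 addr0.
apply/eqP; rewrite -subr_eq0; apply/eqP.
have := @van2 M B Bl Br (s ++ [seq (- p.1, p.2) | p <- t]).
have E : \sum_(p <- t) B (- p.1) p.2 = - \sum_(p <- t) B p.1 p.2.
  by rewrite -sumrN; apply: eq_bigr => p _; exact: BN.
rewrite big_cat big_map /= E; apply => f g.
have E2 : \sum_(p <- t) f (- p.1) * g p.2 = - \sum_(p <- t) f p.1 * g p.2.
  by rewrite -sumrN; apply: eq_bigr => p _; rewrite linearN mulNr.
by rewrite big_cat big_map /= E2 H subrr.
Qed.

Lemma teq3_tr (M : lmodType K) (B : V -> V -> V -> M)
  (B1 : forall y z k a b, B (k *: a + b) y z = k *: B a y z + B b y z)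
  (B2 : forall x z k a b, B x (k *: a + b) z = k *: B x a z + B x b z)
  (B3 : forall x y k a b, B x y (k *: a + b) = k *: B x y a + B x y b)
  (s t : seq (V * V * V)) :
  teq3 s t -> \sum_(p <- s) B p.1.1 p.1.2 p.2 = \sum_(p <- t) B p.1.1 p.1.2 p.2.
Proof.
move=> H.
have BN : forall x y z, B (- x) y z = - B x y z.
  have B0 : forall y z, B 0 y z = 0.
    by move=> y z; have := B1 y z (-1) 0 0; rewrite !scaleN1r !addNr => ->.
  by move=> x y z; have := B1 y z (-1) x 0; rewrite !scaleN1r addr0 B0 addr0.
apply/eqP; rewrite -subr_eq0; apply/eqP.
have := @peel K V (V * V) (fun phi => exists g h : {scalar V}, forall z, phi z = g z.1 * h z.2)
  M (fun x z => B x z.1 z.2) (fun z => B1 z.1 z.2)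
  _ ([seq (p.1.1, (p.1.2, p.2)) | p <- s] ++ [seq (- p.1.1, (p.1.2, p.2)) | p <- t]).
have E : \sum_(p <- t) B (- p.1.1) p.1.2 p.2 = - \sum_(p <- t) B p.1.1 p.1.2 p.2.
  by rewrite -sumrN; apply: eq_bigr => p _; exact: BN.
rewrite big_cat !big_map /= E; apply.
  move=> w Hw x.
  have := @van2 M (B x) (fun y => B2 x y) (B3 x) [seq (p.1 *: p.2.1, p.2.2) | p <- w].
  have BZ : forall c a z, B x (c *: a) z = c *: B x a z.
    move=> c a z; have := B2 x z c a 0; rewrite !addr0 => ->.
    by have := B2 x z (-1) 0 0; rewrite !scaleN1r !addNr => ->; rewrite addr0.
  have E3 : \sum_(p <- w) B x (p.1 *: p.2.1) p.2.2 = \sum_(p <- w) p.1 *: B x p.2.1 p.2.2.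
    by apply: eq_bigr => p _; rewrite BZ.
  rewrite big_map /= E3; apply => f g.
  have E4 : \sum_(p <- w) f (p.1 *: p.2.1) * g p.2.2 = \sum_(p <- w) p.1 * (fun z => f z.1 * g z.2) p.2.
    by apply: eq_bigr => p _; rewrite linearZ /= mulrA.
  rewrite big_map /= E4; apply: (Hw (fun z => f z.1 * g z.2)); by exists f, g.
move=> f phi [g [h gh]].
have E5 : \sum_(p <- t) f (- p.1.1) * phi (p.1.2, p.2) = - \sum_(p <- t) f p.1.1 * g p.1.2 * h p.2.
  by rewrite -sumrN; apply: eq_bigr => p _; rewrite linearN mulNr gh mulrA.
have E6 : \sum_(p <- s) f p.1.1 * phi (p.1.2, p.2) = \sum_(p <- s) f p.1.1 * g p.1.2 * h p.2.
  by apply: eq_bigr => p _; rewrite gh mulrA.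
by rewrite big_cat !big_map /= E5 E6 H subrr.
Qed.
End Tr.


Section Main.
Variables (K : fieldType) (A : algType K) (D : A -> seq (A * A)) (e : A -> K) (S : A -> A).
Hypothesis HH : hopf_algebra D e S.

Lemma Dlin k a b : teq2 (D (k *: a + b)) ([seq (k *: p.1, p.2) | p <- D a] ++ D b).
Proof. by case: HH. Qed.
Lemma coas a : teq3 [seq (q.1, q.2, p.2) | p <- D a, q <- D p.1]
             [seq (p.1, q.1, q.2) | p <- D a, q <- D p.2].
Proof. by case: HH. Qed.
Lemma elin k a b : e (k *: a + b) = k * e a + e b.
Proof. by case: HH => _ _ [] . Qed.
Lemma cu1 a : \sum_(p <- D a) e p.1 *: p.2 = a.
Proof. by case: HH => _ _ [_ /(_ a) []]. Qed.
Lemma cu2 a : \sum_(p <- D a) e p.2 *: p.1 = a.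
Proof. by case: HH => _ _ [_ /(_ a) []]. Qed.
Lemma Dmul a b : teq2 (D (a * b)) [seq (p.1 * q.1, p.2 * q.2) | p <- D a, q <- D b].
Proof. by case: HH => _ _ _ []. Qed.
Lemma emul a b : e (a * b) = e a * e b.
Proof. by case: HH => _ _ _ []. Qed.
Lemma e1 : e 1 = 1.
Proof. by case: HH => _ _ _ []. Qed.
Lemma Slin k a b : S (k *: a + b) = k *: S a + S b.
Proof. by case: HH => _ _ _ _ []. Qed.
Lemma an1 a : \sum_(p <- D a) S p.1 * p.2 = (e a)%:A.
Proof. by case: HH => _ _ _ _ [_ /(_ a) []]. Qed.
Lemma an2 a : \sum_(p <- D a) p.1 * S p.2 = (e a)%:A.
Proof. by case: HH => _ _ _ _ [_ /(_ a) []]. Qed.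

Definition lin (F : A -> A) := forall k a b, F (k *: a + b) = k *: F a + F b.

Lemma lin_id : lin (fun x => x). Proof. by []. Qed.
Lemma lin_mulr c F : lin F -> lin (fun x => F x * c).
Proof. by move=> H k a b; rewrite H mulrDl scalerAl. Qed.
Lemma lin_mull c F : lin F -> lin (fun x => c * F x).
Proof. by move=> H k a b; rewrite H mulrDr scalerAr. Qed.
Lemma lin_S F : lin F -> lin (fun x => S (F x)).
Proof. by move=> H k a b; rewrite H Slin. Qed.
Lemma lin_sum (I : Type) (r : seq I) (F : I -> A -> A) :
  (forall i, lin (F i)) -> lin (fun x => \sum_(i <- r) F i x).
Proof.
move=> H k a b; rewrite scaler_sumr -big_split; apply: eq_bigr => i _; exact: H.
Qed.
Lemma lin_scl c F : lin F -> lin (fun x => c *: F x).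
Proof. by move=> H k a b; rewrite H scalerDr !scalerA mulrC. Qed.
Lemma lin_e v F : lin F -> lin (fun x => e (F x) *: v).
Proof. by move=> H k a b; rewrite H elin scalerDl scalerA. Qed.

Lemma lin0 F : lin F -> F 0 = 0.
Proof. by move=> H; have := H (-1) 0 0; rewrite !scaleN1r !addNr. Qed.
Lemma linZ F k a : lin F -> F (k *: a) = k *: F a.
Proof. by move=> H; have := H k a 0; rewrite !addr0 lin0 // addr0. Qed.
Lemma lin_sumZ F (I : Type) (r : seq I) (c : I -> K) (v : I -> A) : lin F ->
  F (\sum_(i <- r) c i *: v i) = \sum_(i <- r) c i *: F (v i).
Proof.
move=> H; elim: r => [|p r IH]; first by rewrite !big_nil lin0.
by rewrite !big_cons H IH.
Qed.
Lemma lin_sum1 F (I : Type) (r : seq I) (v : I -> A) : lin F ->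
  F (\sum_(i <- r) v i) = \sum_(i <- r) F (v i).
Proof.
move=> H; elim: r => [|p r IH]; first by rewrite !big_nil lin0.
by rewrite !big_cons; have := H 1 (v p) (\sum_(i <- r) v i); rewrite !scale1r => ->; rewrite IH.
Qed.

Ltac lintac := repeat (match goal with
  | |- forall _, _ => intro
  | |- _ => first [ apply: lin_id | apply: lin_sum | apply: lin_S | apply: lin_mulr
         | apply: lin_mull | apply: lin_e | apply: lin_scl ]
  end; simpl).

Lemma tr2 (B : A -> A -> A) s t : (forall y, lin (fun x => B x y)) -> (forall x, lin (B x)) ->
  teq2 s t -> \sum_(p <- s) B p.1 p.2 = \sum_(p <- t) B p.1 p.2.
Proof. move=> H1 H2; exact: (@teq2_tr K A A B H1 H2). Qed.

Lemma coasG (G : A -> A -> A -> A) a :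
  (forall y z, lin (fun x => G x y z)) -> (forall x z, lin (fun y => G x y z)) ->
  (forall x y, lin (G x y)) ->
  \sum_(p <- D a) \sum_(q <- D p.1) G q.1 q.2 p.2 =
  \sum_(p <- D a) \sum_(q <- D p.2) G p.1 q.1 q.2.
Proof.
move=> H1 H2 H3.
have := @teq3_tr K A A G H1 H2 H3 _ _ (coas a).
by rewrite !big_allpairs_dep /=.
Qed.

Lemma Santi a b : S (a * b) = S b * S a.
Proof.
have E0 : S b * S a = \sum_(p <- D a) \sum_(q <- D b) e (p.1 * q.1) *: (S q.2 * S p.2).
  have -> : S b = \sum_(q <- D b) e q.1 *: S q.2.
    by rewrite -{1}(cu1 b) (@lin_sumZ S) //; lintac.
  have -> : S a = \sum_(q <- D a) e q.1 *: S q.2.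
    by rewrite -{1}(cu1 a) (@lin_sumZ S) //; lintac.
  rewrite mulr_suml exchange_big /=; apply: eq_bigr => p _.
  rewrite mulr_sumr; apply: eq_bigr => q _.
  by rewrite -scalerAl -scalerAr scalerA emul mulrC.
have E1 : forall p q (w : A), e (p * q) *: w =
    \sum_(x <- D p) \sum_(y <- D q) S (x.1 * y.1) * (x.2 * y.2) * w.
  move=> p q w.
  rewrite -mulr_algl -an1 mulr_suml (@tr2 (fun u v => S u * v * w) _ _ _ _ (Dmul p q)); try by lintac.
  by rewrite big_allpairs_dep.
rewrite E0.
under eq_bigr => p _ do under eq_bigr => q _ do rewrite E1.
under eq_bigr => p _ do rewrite exchange_big /=.
rewrite (@coasG (fun u v w => \sum_(q <- D b) \sum_(y <- D q.1) S (u * y.1) * (v * y.2) * (S q.2 * S w))); try by lintac.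
have E2 : forall p1 x1 x2 : A,
  \sum_(q <- D b) \sum_(y <- D q.1) S (p1 * y.1) * (x1 * y.2) * (S q.2 * S x2) =
  \sum_(q <- D b) \sum_(y <- D q.2) S (p1 * q.1) * (x1 * y.1) * (S y.2 * S x2).
  move=> p1 x1 x2.
  by apply: (@coasG (fun u v w => S (p1 * u) * (x1 * v) * (S w * S x2))); lintac.
under eq_bigr => p _ do under eq_bigr => x _ do rewrite E2.
have E3 : forall (p1 x1 x2 q1 q2 : A),
  \sum_(y <- D q2) S (p1 * q1) * (x1 * y.1) * (S y.2 * S x2) = e q2 *: (S (p1 * q1) * x1 * S x2).
  move=> p1 x1 x2 q1 q2.
  transitivity (S (p1 * q1) * x1 * (\sum_(y <- D q2) y.1 * S y.2) * S x2).
    rewrite mulr_sumr mulr_suml; apply: eq_bigr => y _; by rewrite !mulrA.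
  by rewrite an2 -mulrA mulr_algl -scalerAr.
under eq_bigr => p _ do under eq_bigr => x _ do under eq_bigr => q _ do rewrite E3.
under eq_bigr => p _ do rewrite exchange_big /=.
have E4 : forall (p1 p2 q1 q2 : A), \sum_(x <- D p2) e q2 *: (S (p1 * q1) * x.1 * S x.2)
   = (e p2 * e q2) *: S (p1 * q1).
  move=> p1 p2 q1 q2.
  transitivity (e q2 *: (S (p1 * q1) * \sum_(x <- D p2) x.1 * S x.2)).
    rewrite mulr_sumr scaler_sumr; apply: eq_bigr => y _; by rewrite !mulrA.
  by rewrite an2 mulr_algr scalerA mulrC.
under eq_bigr => p _ do under eq_bigr => q _ do rewrite E4.
rewrite -{1}(cu2 a) -{1}(cu2 b) mulr_suml (@lin_sum1 S); last by lintac.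
apply: eq_bigr => p _; rewrite mulr_sumr (@lin_sum1 S); last by lintac.
apply: eq_bigr => q _; rewrite -scalerAl -scalerAr scalerA.
rewrite (@linZ S); by lintac.
Qed.
Lemma scal_mr (f : {scalar A}) c : exists f' : {scalar A}, forall x, f' x = f (x * c).
Proof. apply: (@mkscalar K A (fun x => f (x * c))) => k u v /=. by rewrite mulrDl -scalerAl linearP. Qed.
Lemma scal_ml (f : {scalar A}) c : exists f' : {scalar A}, forall x, f' x = f (c * x).
Proof. apply: (@mkscalar K A (fun x => f (c * x))) => k u v /=. by rewrite mulrDr -scalerAr linearP. Qed.

Lemma teq2_sym (s t : seq (A * A)) : @teq2 K A A s t -> @teq2 K A A t s.
Proof. by move=> H f g; rewrite H. Qed.
Lemma teq2_trans (s t u : seq (A * A)) : @teq2 K A A s t -> @teq2 K A A t u -> @teq2 K A A s u.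
Proof. by move=> H1 H2 f g; rewrite H1 H2. Qed.

Lemma teq2_pairs (s s' t t' : seq (A * A)) : @teq2 K A A s s' -> @teq2 K A A t t' ->
  @teq2 K A A [seq (p.1 * q.1, p.2 * q.2) | p <- s, q <- t]
       [seq (p.1 * q.1, p.2 * q.2) | p <- s', q <- t'].
Proof.
move=> Hs Ht f g; rewrite !big_allpairs_dep /=.
transitivity (\sum_(p <- s') \sum_(q <- t) f (p.1 * q.1) * g (p.2 * q.2)).
  rewrite exchange_big [RHS]exchange_big /=; apply: eq_bigr => q _.
  have [f' Hf] := scal_mr f q.1; have [g' Hg] := scal_mr g q.2.
  transitivity (\sum_(p <- s) f' p.1 * g' p.2).
    by apply: eq_bigr => p _; rewrite Hf Hg.
  rewrite (Hs f' g'); by apply: eq_bigr => p _; rewrite Hf Hg.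
apply: eq_bigr => p _.
have [f' Hf] := scal_ml f p.1; have [g' Hg] := scal_ml g p.2.
transitivity (\sum_(q <- t) f' q.1 * g' q.2).
  by apply: eq_bigr => q _; rewrite Hf Hg.
rewrite (Ht f' g'); by apply: eq_bigr => q _; rewrite Hf Hg.
Qed.

Lemma sumD_lin (G : A -> A -> A) : (forall y, lin (fun x => G x y)) -> (forall x, lin (G x)) ->
  lin (fun u => \sum_(x <- D u) G x.1 x.2).
Proof.
move=> H1 H2 k a b.
rewrite (@tr2 G _ _ H1 H2 (Dlin k a b)) big_cat big_map /= scaler_sumr.
congr (_ + _); apply: eq_bigr => p _; exact: (@linZ (fun x => G x p.2) k p.1 (H1 p.2)).
Qed.

Lemma rep X a : hopf_subalgebra D S X -> X a ->
  exists s, in2 X X s /\ @teq2 K A A s (D a).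
Proof. by case=> _ _ _ _ H /H. Qed.

Lemma b_to_c X Y : hopf_subalgebra D S X -> hopf_subalgebra D S Y ->
  (forall a b, X a -> Y b -> a * b = b * a) ->
  forall a b, X a -> Y b ->
    \sum_(p <- D a) \sum_(q <- D b) p.1 * q.1 * S p.2 * S q.2 = (e a * e b)%:A.
Proof.
move=> HX HY cb a b Xa Yb.
have [s [sX sD]] := @rep X a HX Xa.
have [t [tY tD]] := @rep Y b HY Yb.
have XS : forall u, X u -> X (S u) by case: HX.
have T1 : forall p : A * A, \sum_(q <- D b) p.1 * q.1 * S p.2 * S q.2 = \sum_(q <- t) p.1 * q.1 * S p.2 * S q.2.
  move=> p; apply: (@tr2 (fun u v => p.1 * u * S p.2 * S v)); try by lintac.
have T2 : forall q : A * A, \sum_(p <- D a) p.1 * q.1 * S p.2 * S q.2 = \sum_(p <- s) p.1 * q.1 * S p.2 * S q.2.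
  move=> q; apply: (@tr2 (fun u v => u * q.1 * S v * S q.2)); try by lintac.
under eq_bigr => p _ do rewrite T1.
rewrite exchange_big /=.
under eq_bigr => q _ do rewrite T2.
transitivity (\sum_(q <- t) (e a)%:A * q.1 * S q.2).
  rewrite big_seq [RHS]big_seq; apply: eq_bigr => q qt.
  have [Yq1 Yq2] := tY q qt.
  rewrite -an2 (@tr2 (fun u v => u * S v) _ _ _ _ (@teq2_sym _ _ sD)); try by lintac.
  rewrite !mulr_suml big_seq [RHS]big_seq; apply: eq_bigr => p ps.
  have [Xp1 Xp2] := sX p ps.
  by rewrite -[p.1 * q.1 * _]mulrA -(cb _ _ (XS _ Xp2) Yq1) !mulrA.
under eq_bigr => q _ do rewrite -mulrA.
rewrite -mulr_sumr -(@tr2 (fun u v => u * S v) _ _ _ _ (@teq2_sym _ _ tD)); try by lintac.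
by rewrite an2 mulr_algl scalerA.
Qed.

Lemma c_to_b X Y : hopf_subalgebra D S X -> hopf_subalgebra D S Y ->
  (forall a b, X a -> Y b ->
    \sum_(p <- D a) \sum_(q <- D b) p.1 * q.1 * S p.2 * S q.2 = (e a * e b)%:A) ->
  forall a b, X a -> Y b -> a * b = b * a.
Proof.
move=> HX HY cc a b Xa Yb.
have [s [sX sD]] := @rep X a HX Xa.
have [t [tY tD]] := @rep Y b HY Yb.
have E0 : b * a = \sum_(p <- s) \sum_(q <- t) (e p.1 * e q.1) *: (q.2 * p.2).
  have -> : b = \sum_(q <- t) e q.1 *: q.2.
    by rewrite -{1}(cu1 b) (@tr2 (fun u v => e u *: v) _ _ _ _ tD); lintac.
  have -> : a = \sum_(q <- s) e q.1 *: q.2.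
    by rewrite -{1}(cu1 a) (@tr2 (fun u v => e u *: v) _ _ _ _ sD); lintac.
  rewrite mulr_suml exchange_big /=; apply: eq_bigr => p _.
  rewrite mulr_sumr; apply: eq_bigr => q _.
  by rewrite -scalerAl -scalerAr scalerA mulrC.
rewrite E0; symmetry.
transitivity (\sum_(p <- s) \sum_(q <- t) \sum_(x <- D p.1) \sum_(y <- D q.1)
   x.1 * y.1 * S x.2 * S y.2 * (q.2 * p.2)).
  rewrite [LHS]big_seq [RHS]big_seq; apply: eq_bigr => p ps.
  rewrite [LHS]big_seq [RHS]big_seq; apply: eq_bigr => q qt.
  have [Xp1 _] := sX p ps; have [Yq1 _] := tY q qt.
  rewrite -mulr_algl -(cc _ _ Xp1 Yq1) mulr_suml; apply: eq_bigr => x _.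
  by rewrite mulr_suml.
under eq_bigr => p _ do rewrite exchange_big /=.
rewrite (@tr2 (fun u v => \sum_(x <- D u) \sum_(q <- t) \sum_(y <- D q.1)
   x.1 * y.1 * S x.2 * S y.2 * (q.2 * v)) _ _ _ _ sD) /=; first last.
- by lintac.
- by move=> v; apply: (@sumD_lin (fun x1 x2 => \sum_(q <- t) \sum_(y <- D q.1)
   x1 * y.1 * S x2 * S y.2 * (q.2 * v))); lintac.
rewrite (@coasG (fun u v w => \sum_(q <- t) \sum_(y <- D q.1) u * y.1 * S v * S y.2 * (q.2 * w))); try by lintac.
have E2 : forall p1 x1 x2 : A,
  \sum_(q <- t) \sum_(y <- D q.1) p1 * y.1 * S x1 * S y.2 * (q.2 * x2) =
  \sum_(q <- D b) \sum_(y <- D q.2) p1 * q.1 * S x1 * S y.1 * (y.2 * x2).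
  move=> p1 x1 x2.
  rewrite (@tr2 (fun u v => \sum_(y <- D u) p1 * y.1 * S x1 * S y.2 * (v * x2)) _ _ _ _ tD) /=; first last.
  - by lintac.
  - by move=> v; apply: (@sumD_lin (fun y1 y2 => p1 * y1 * S x1 * S y2 * (v * x2))); lintac.
  by apply: (@coasG (fun u v w => p1 * u * S x1 * S v * (w * x2))); lintac.
under eq_bigr => p _ do under eq_bigr => x _ do rewrite E2.
have E3 : forall (p1 x1 x2 q1 q2 : A),
  \sum_(y <- D q2) p1 * q1 * S x1 * S y.1 * (y.2 * x2) = e q2 *: (p1 * q1 * S x1 * x2).
  move=> p1 x1 x2 q1 q2.
  transitivity (p1 * q1 * S x1 * (\sum_(y <- D q2) S y.1 * y.2) * x2).
    rewrite mulr_sumr mulr_suml; apply: eq_bigr => y _; by rewrite !mulrA.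
  by rewrite an1 -mulrA mulr_algl -scalerAr.
under eq_bigr => p _ do under eq_bigr => x _ do under eq_bigr => q _ do rewrite E3.
under eq_bigr => p _ do rewrite exchange_big /=.
have E4 : forall (p1 p2 q1 q2 : A), \sum_(x <- D p2) e q2 *: (p1 * q1 * S x.1 * x.2)
   = (e p2 * e q2) *: (p1 * q1).
  move=> p1 p2 q1 q2.
  transitivity (e q2 *: (p1 * q1 * \sum_(x <- D p2) S x.1 * x.2)).
    rewrite mulr_sumr scaler_sumr; apply: eq_bigr => y _; by rewrite !mulrA.
  by rewrite an1 mulr_algr scalerA mulrC.
under eq_bigr => p _ do under eq_bigr => q _ do rewrite E4.
symmetry; rewrite -{1}(cu2 a) -{1}(cu2 b) mulr_suml.
apply: eq_bigr => p _; rewrite mulr_sumr.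
by apply: eq_bigr => q _; rewrite -scalerAl -scalerAr scalerA.
Qed.

Lemma main_sec X Y : hopf_subalgebra D S X -> hopf_subalgebra D S Y ->
  let cond_a :=
    exists P : A -> A -> A,
      [/\ tensor_hopf_morphism D e S X Y P,
          (forall a, X a -> P a 1 = a),
          (forall b, Y b -> P 1 b = b)
        & forall P' : A -> A -> A,
            tensor_hopf_morphism D e S X Y P' ->
            (forall a, X a -> P' a 1 = a) ->
            (forall b, Y b -> P' 1 b = b) ->
            forall a b, X a -> Y b -> P' a b = P a b] in
  let cond_b := forall a b, X a -> Y b -> a * b = b * a in
  let cond_c := forall a b, X a -> Y b ->
    \sum_(p <- D a) \sum_(q <- D b) p.1 * q.1 * S p.2 * S q.2
    = (e a * e b)%:A in
  (cond_a <-> cond_b) /\ (cond_b <-> cond_c).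
Proof.
move=> HX HY ca cb cc.
have X1 : X 1 by case: HX.
have Y1 : Y 1 by case: HY.
have XS : forall u, X u -> X (S u) by case: HX.
have YS : forall u, Y u -> Y (S u) by case: HY.
have uniqP : forall P', tensor_hopf_morphism D e S X Y P' ->
    (forall a, X a -> P' a 1 = a) -> (forall b, Y b -> P' 1 b = b) ->
    forall a b, X a -> Y b -> P' a b = a * b.
  move=> P' [_ [_ Pm] _ _] Pa Pb a b Xa Yb.
  by rewrite -{2}(Pa a Xa) -{2}(Pb b Yb) -Pm // mulr1 mul1r.
split; last first.
  split; [exact: b_to_c | exact: c_to_b].
split.
  move=> [P [HP Pa Pb _]] a b Xa Yb.
  have := uniqP P HP Pa Pb a b Xa Yb.
  case: HP => _ [_ Pm] _ _ <-.
  by rewrite -{2}(Pb b Yb) -{2}(Pa a Xa) -Pm // mul1r mulr1.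
move=> Hb; exists (fun a b => a * b); split => //.
- split.
  + split=> * /=; [by rewrite mulrDl scalerAl | by rewrite mulrDr scalerAr].
  + split; first by rewrite /= mulr1.
    move=> a a' b b' Xa Xa' Yb Yb' /=.
    by rewrite -!mulrA (mulrA a') (Hb a' b) // !mulrA.
  + split.
      move=> a b s t Xa Yb sX sD tY tD /=.
      apply: (@teq2_trans _ _ _ (Dmul a b)).
      exact: (@teq2_pairs _ _ _ _ (@teq2_sym _ _ sD) (@teq2_sym _ _ tD)).
    by move=> a b _ _ /=; rewrite emul.
  + by move=> a b Xa Yb /=; rewrite Santi (Hb (S a) (S b) (XS _ Xa) (YS _ Yb)).
- by move=> a _; rewrite /= mulr1.
- by move=> b _; rewrite /= mul1r.
Qed.

End Main.

Theorem lemma4p1 (K : fieldType) (A : algType K)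
  (D : A -> seq (A * A)) (e : A -> K) (S : A -> A) (X Y : A -> Prop) :
  hopf_algebra D e S -> cocommutative D ->
  hopf_subalgebra D S X -> hopf_subalgebra D S Y ->
  let cond_a :=
    exists P : A -> A -> A,
      [/\ tensor_hopf_morphism D e S X Y P,
          (forall a, X a -> P a 1 = a),
          (forall b, Y b -> P 1 b = b)
        & (* uniqueness *)
          forall P' : A -> A -> A,
            tensor_hopf_morphism D e S X Y P' ->
            (forall a, X a -> P' a 1 = a) ->
            (forall b, Y b -> P' 1 b = b) ->
            forall a b, X a -> Y b -> P' a b = P a b] in
  let cond_b := forall a b, X a -> Y b -> a * b = b * a in
  let cond_c := forall a b, X a -> Y b ->
    \sum_(p <- D a) \sum_(q <- D b) p.1 * q.1 * S p.2 * S q.2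
    = (e a * e b)%:A in
  (cond_a <-> cond_b) /\ (cond_b <-> cond_c).
Proof.
move=> HH _ HX HY; exact: (@main_sec K A D e S HH X Y HX HY).
Qed.
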